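(* Let $\Sigma=\{c_1\prec\dots\prec c_\sigma\}$, $n\ge1$, and nonnegative integers $n_c$ ($c\in\Sigma$) with $\sum_c n_c=n-1$ be given, and let $\mathcal U$, $\mathcal M$, $f$ be as in the context. For every matrix $M\in\mathcal M$, its $n$ rotations $M^0,M^1,\dots,M^{n-1}$ are pairwise distinct, and exactly one of them belongs to $f(\mathcal U)$.
   Context: A trie over a finite totally ordered alphabet $\Sigma$ is a rooted ordered tree with edges labeled by symbols of $\Sigma$ such that edges leaving the same node have distinct labels and siblings are ordered by their incoming labels; $out(u)$ denotes the set of labels of edges leaving node $u$. $\mathcal U$ is the set of tries with $n$ nodes over $\Sigma$ in which exactly $n_c$ edges are labeled $c$, for every $c$. $\mathcal M$ is the set of all $\sigma\times n$ binary matrices whose $i$-th row contains exactly $n_{c_i}$ ones, for every $i\in[\sigma]$. The map $f:\mathcal U\to\mathcal M$ sends a trie with nodes $u_1,\dots,u_n$ in pre-order (children visited in increasing label order) to the matrix $M$ with $M[i][j]=1$ iff $c_i\in out(u_j)$. For $M\in\mathcal M$ and integer $r\ge0$, the $r$-th rotation $M^r$ is the matrix whose $j$-th column is the $((j+r-1)\bmod n)+1$-th column of $M$, for every $j\in[n]$. *)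

(* Defs.v *)
From mathcomp Require Import all_boot all_algebra.
Set Implicit Arguments. Unset Strict Implicit. Unset Printing Implicit Defensive.

(* Alphabet Sigma = 'I_sigma, with c_1 < ... < c_sigma the order of ordinals
   (c_{i+1} is the ordinal i). *)
Inductive trie (S : Type) : Type := Node of seq (S * trie S).
Arguments Node {S}.

Section Tries.
Variable sigma : nat.
Notation S := ('I_sigma).

Fixpoint wf_trie (t : trie S) : bool :=
  let: Node ch := t in
  sorted (fun a b : S => a < b) (map fst ch) && all (fun p => wf_trie p.2) ch.

Fixpoint preorder_out (t : trie S) : seq (seq S) :=
  let: Node ch := t in
  map fst ch :: flatten (map (fun p => preorder_out p.2) ch).

Fixpoint edge_labels (t : trie S) : seq S :=
  let: Node ch := t in
  flatten (map (fun p => p.1 :: edge_labels p.2) ch).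

Definition num_nodes (t : trie S) : nat := size (preorder_out t).

Definition inU (n : nat) (cnt : S -> nat) (t : trie S) : Prop :=
  wf_trie t /\ num_nodes t = n /\ (forall c : S, count_mem c (edge_labels t) = cnt c).

Definition inM (n : nat) (cnt : S -> nat) (M : 'M[bool]_(sigma, n)) : Prop :=
  forall i : S, #|[pred j : 'I_n | M i j]| = cnt i.

Definition fmx (n : nat) (t : trie S) : 'M[bool]_(sigma, n) :=
  \matrix_(i < sigma, j < n) (i \in nth [::] (preorder_out t) j).

End Tries.

Lemma rot_proof (n : nat) (j : 'I_n) (r : nat) : (j + r) %% n < n.
Proof. apply: ltn_pmod. exact: leq_ltn_trans (leq0n j) (ltn_ord j). Qed.

Definition rotmx (sigma n : nat) (r : nat) (M : 'M[bool]_(sigma, n)) : 'M[bool]_(sigma, n) :=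
  \matrix_(i < sigma, j < n) M i (Ordinal (rot_proof j r)).

(* Main.v *)
Require Import Defs.
From mathcomp Require Import all_boot all_algebra zify.

Definition valid (N : nat) (d : nat -> nat) (r : nat) :=
  forall k, k < N -> k <= \sum_(i < k) d ((i + r) %% N).


Lemma rotsum N (d : nat -> nat) r k : r < N -> k <= N ->
  if r + k <= N then \sum_(i < k) d ((i + r) %% N) + \sum_(i < r) d i = \sum_(i < r + k) d i
  else \sum_(i < k) d ((i + r) %% N) + \sum_(i < r) d i = \sum_(i < N) d i + \sum_(i < r + k - N) d i.
Proof.
move=> rN; elim: k => [|k IH] kN.
  by rewrite addn0 (ltnW rN) big_ord0 add0n.
have {IH} := IH (ltnW kN).
rewrite big_ord_recr /=.
case: (ltngtP (r + k) N) => H1.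
- have -> : r + k.+1 <= N by lia.
  rewrite modn_small; last by lia.
  move=> IH; rewrite addnS big_ord_recr /= -IH (addnC k r); lia.
- have -> : (r + k.+1 <= N) = false by lia.
  have -> : (k + r) %% N = (r + k - N).
    have E : r + k = (r + k - N) + N by lia.
    rewrite addnC {1}E modnDr modn_small; lia.
  move=> IH.
  have -> : r + k.+1 - N = (r + k - N).+1 by lia.
  rewrite big_ord_recr /=; lia.
- have -> : (r + k.+1 <= N) = false by lia.
  have -> : (k + r) %% N = 0 by rewrite addnC H1 modnn.
  move=> IH.
  have -> : r + k.+1 - N = 1 by lia.
  rewrite big_ord1 /=; rewrite H1 in IH; lia.
Qed.

Lemma rot_total N (d : nat -> nat) r : r < N -> \sum_(i < N) d ((i + r) %% N) = \sum_(i < N) d i.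
Proof.
move=> rN; have := rotsum N d r N rN (leqnn N).
case: ifP => H.
  have -> : r = 0 by lia.
  move=> E; rewrite big_ord0 add0n in E; by rewrite -E addn0.
have -> : r + N - N = r by lia.
lia.
Qed.

Lemma cycle_uniq N (d : nat -> nat) r1 r2 : \sum_(i < N) d i = N.-1 ->
  r1 < N -> r2 < N -> valid N d r1 -> valid N d r2 -> r1 = r2.
Proof.
move=> HS.
wlog lt12 : r1 r2 / r1 < r2.
  move=> W h1 h2 v1 v2; case: (ltngtP r1 r2) => H.
  - exact: W.
  - by apply/esym; apply: W.
  - done.
move=> h1 h2 v1 v2.
have A := rotsum N d r2 (N - r2 + r1) h2.
have B := rotsum N d r1 (r2 - r1) h1.
have C := v2 (N - r2 + r1) ltac:(lia).
have D := v1 (r2 - r1) ltac:(lia).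
have {A} := A ltac:(lia). have {B} := B ltac:(lia).
have -> : r1 + (r2 - r1) <= N by lia.
have -> : r1 + (r2 - r1) = r2 by lia.
move=> B'; case: ifP => HH A'.
- have E1 : r2 + (N - r2 + r1) = N by lia.
  rewrite E1 in A'; lia.
- have E1 : r2 + (N - r2 + r1) - N = r1 by lia.
  rewrite E1 in A'; lia.
Qed.

Lemma cycle_exist N (d : nat -> nat) : 0 < N -> \sum_(i < N) d i = N.-1 -> exists2 r, r < N & valid N d r.
Proof.
move=> N0 HS.
pose key j := \sum_(i < j) d i + N - j.
have [m0 [[j0 j0N Hj0] Hmin]] : exists m, (exists2 j, j < N & key j = m) /\
    (forall j, j < N -> m <= key j).
  pose P := fun m => [exists j : 'I_N, key j == m].
  have exP : exists m, P m by exists (key 0); apply/existsP; exists (Ordinal N0).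
  case: (ex_minnP exP) => m /existsP [j /eqP Hj] Hm.
  exists m; split; first by exists j.
  move=> j' j'N; apply: Hm; apply/existsP; exists (Ordinal j'N); by [].
pose Q := fun j => (j < N) && (key j == m0).
have exQ : exists j, Q j by exists j0; rewrite /Q j0N Hj0 eqxx.
case: (ex_minnP exQ) => r /andP [rN /eqP Hr] Hrmin.
exists r => // k kN.
have R := rotsum N d r k rN (ltnW kN).
case: ifP R => H R.
- case: (ltngtP (r + k) N) => H2; last first.
  + (* r + k = N, r > 0 *)
    have r0 : 0 < r by lia.
    have K0 := Hmin 0 N0.
    have K0' : key 0 != m0.
      apply/negP => /eqP E.
      have := Hrmin 0; rewrite /Q N0 E eqxx => /(_ isT); lia.
    move: K0 K0' R; rewrite /key big_ord0 -Hr /key H2 HS => K0 K0' R.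
    lia.
  + lia.
  + have := Hmin (r + k) H2; rewrite -Hr /key; lia.
- set j := r + k - N in R.
  have jr : j < r by rewrite /j; lia.
  have Kj := Hmin j ltac:(lia).
  have Kj' : key j != m0.
    apply/negP => /eqP E.
    have := Hrmin j; rewrite /Q E eqxx andbT => /(_ ltac:(lia)); lia.
  move: Kj Kj' R; rewrite -Hr /key HS => Kj Kj' R.
  have : \sum_(i < j) d i + N - j != \sum_(i < r) d i + N - r by [].
  lia.
Qed.

Section T.
Variable sigma : nat.
Notation S := ('I_sigma).
Notation po := (@preorder_out sigma).
Notation ltS := (fun a b : S => a < b).

Definition fvalid (k : nat) (L : seq (seq S)) :=
  (forall j, j < size L -> j < k + sumn (map size (take j L))) /\
  size L = k + sumn (map size L).

Lemma fvalid_nil k : fvalid k [::] -> k = 0.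
Proof. by case=> _ /= ; lia. Qed.

Lemma fvalid_cons k ls L : fvalid k (ls :: L) <-> 0 < k /\ fvalid (k.-1 + size ls) L.
Proof.
split.
- case=> H1 H2.
  have k0 : 0 < k by have := H1 0 isT; rewrite take0 /=; lia.
  split => //; split.
  + move=> j jL; have := H1 j.+1; rewrite /= ltnS => /(_ jL); lia.
  + move: H2 => /=; lia.
- case=> k0 [H1 H2]; split.
  + case=> [|j] /=; first lia.
    rewrite ltnS => /H1; lia.
  + rewrite /= H2; lia.
Qed.

Lemma forest_ind (P : seq (trie S) -> Prop) : P [::] ->
  (forall ch ts, P (map snd ch ++ ts) -> P (Node ch :: ts)) -> forall ts, P ts.
Proof.
move=> P0 PS ts.
move: {2}(size (flatten (map po ts))) (leqnn (size (flatten (map po ts)))) => m.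
elim: m ts => [|m IH] [|[ch] ts] //= Hm; apply: PS; apply: IH.
by rewrite map_cat flatten_cat -map_comp size_cat in Hm *; rewrite /= ltnS in Hm.
Qed.

Lemma po_cons ch ts : flatten (map po (Node ch :: ts)) =
  map fst ch :: flatten (map po (map snd ch ++ ts)).
Proof. by rewrite /= map_cat flatten_cat -map_comp. Qed.

Lemma forest_valid ts : fvalid (size ts) (flatten (map po ts)).
Proof.
elim/forest_ind: ts => [|ch ts IH]; first by split.
rewrite po_cons; apply/fvalid_cons; split => //=.
by move: IH; rewrite size_cat size_map addnC size_map.
Qed.

Lemma count_el (c : S) (ch : seq (S * trie S)) (g : trie S -> seq S) :
  count_mem c (flatten (map (fun p => p.1 :: g p.2) ch)) =
  count_mem c (map fst ch) + count_mem c (flatten (map g (map snd ch))).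
Proof. elim: ch => //= p ch IH; rewrite !count_cat /= IH; lia. Qed.

Lemma forest_edges (c : S) ts :
  count_mem c (flatten (map (@edge_labels sigma) ts)) = count_mem c (flatten (flatten (map po ts))).
Proof.
elim/forest_ind: ts => [|ch ts IH] //.
rewrite po_cons /= !count_cat count_el.
move: IH; rewrite !map_cat !flatten_cat !count_cat; move=> E; rewrite -addnA; congr (_ + _); exact: E.
Qed.

Lemma forest_sorted ts : all (@wf_trie sigma) ts -> all (sorted ltS) (flatten (map po ts)).
Proof.
elim/forest_ind: ts => [|ch ts IH] //.
rewrite po_cons /= => /andP [/andP [H1 H2] H3]; rewrite H1 /=; apply: IH.
by rewrite all_cat H3 andbT all_map.
Qed.

Lemma forest_build L k : fvalid k L -> all (sorted ltS) L ->
  exists ts : seq (trie S), [/\ size ts = k, all (@wf_trie sigma) ts & flatten (map po ts) = L].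
Proof.
elim: L k => [|ls L IH] k.
  by move=> /fvalid_nil -> _; exists [::].
move=> /fvalid_cons [k0 H] /= /andP [sls sL].
have [ts' [sz wf' fl']] := IH _ H sL.
pose ch := zip ls (take (size ls) ts').
have szt : size (take (size ls) ts') = size ls by rewrite size_takel // sz; lia.
have e1 : map fst ch = ls by apply: unzip1_zip; rewrite szt.
have e2 : map snd ch = take (size ls) ts' by apply: unzip2_zip; rewrite szt.
exists (Node ch :: drop (size ls) ts'); split.
- rewrite /= size_drop sz; lia.
- rewrite /= e1 sls /=.
  move: wf'; rewrite -{1}(cat_take_drop (size ls) ts') all_cat => /andP [A B].
  by rewrite B andbT -(all_map (fun p => p.2) (@wf_trie sigma)) e2.
- by rewrite po_cons e1 e2 cat_take_drop fl'.
Qed.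

End T.
Lemma card_sum (T : finType) (P : pred T) : #|P| = \sum_(x : T) (P x : nat).
Proof. rewrite -sum1_card big_mkcond /=; apply: eq_bigr => x _; by rewrite unfold_in; case: (P x). Qed.
Lemma sumn_enum (T : finType) (F : T -> nat) : sumn [seq F j | j <- enum T] = \sum_(j : T) F j.
Proof. by rewrite sumnE big_map big_enum. Qed.
Lemma card_rot (T : finType) (f : T -> T) (P : pred T) : injective f -> #|[pred j | P (f j)]| = #|P|.
Proof. move=> fi; rewrite !card_sum [in RHS](reindex_inj fi); by apply: eq_bigr => j _. Qed.

Lemma valid_rot N (d : nat -> nat) r v :
  valid N (fun x => d ((x + r) %% N)) v <-> valid N d ((v + r) %% N).
Proof.
have E : forall i, ((i + v) %% N + r) %% N = (i + (v + r) %% N) %% N.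
  by move=> i; rewrite modnDml modnDmr addnA.
have S k : \sum_(i < k) d (((i + v) %% N + r) %% N) = \sum_(i < k) d ((i + (v + r) %% N) %% N).
  by apply: eq_bigr => i _; rewrite E.
by split=> H k kN; [rewrite -S | rewrite S]; exact: H.
Qed.

Lemma valid_ext N (d1 d2 : nat -> nat) v : 0 < N ->
  (forall x, x < N -> d1 x = d2 x) -> valid N d1 v -> valid N d2 v.
Proof.
move=> N0 E H k kN; have := H k kN.
by rewrite (eq_bigr (fun i : 'I_k => d2 ((i + v) %% N))) // => i _; rewrite E // ltn_pmod.
Qed.

Lemma sizeP (sigma : nat) (s : seq 'I_sigma) (P : pred 'I_sigma) :
  uniq s -> (forall c, (c \in s) = P c) -> size s = #|P|.
Proof. by move=> /card_uniqP <- H; apply: eq_card => c; rewrite H. Qed.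

Lemma sumn_take (T : Type) (s : seq (seq T)) k : k <= size s ->
  sumn (map size (take k s)) = \sum_(i < k) size (nth [::] s i).
Proof.
elim: k => [|k IH] ks; first by rewrite take0 big_ord0.
by rewrite (take_nth [::]) // map_rcons sumn_rcons IH ?(ltnW ks) // big_ord_recr.
Qed.

Lemma sorted_enum_ord sigma : sorted (fun a b : 'I_sigma => a < b) (enum 'I_sigma).
Proof. by have := iota_ltn_sorted 0 sigma; rewrite -val_enum_ord sorted_map. Qed.

Theorem corollary1 (sigma n : nat) (cnt : 'I_sigma -> nat) :
  0 < n ->
  \sum_(c < sigma) cnt c = n.-1 ->
  forall M : 'M[bool]_(sigma, n), inM cnt M ->
    (forall r1 r2 : 'I_n, r1 != r2 -> rotmx r1 M != rotmx r2 M) /\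
    (exists! r : 'I_n, exists t : trie 'I_sigma, inU n cnt t /\ fmx n t = rotmx r M).
Proof.
case: n => [//|n] _ Hcnt M HM.
set N := n.+1.
pose d := fun x : nat => #|[pred c : 'I_sigma | M c (inord x)]|.
have N0 : 0 < N by [].
have dcol : forall (r : nat) (j : 'I_N), d ((j + r) %% N) = #|[pred c | rotmx r M c j]|.
  move=> r j; apply: eq_card => c; rewrite !inE mxE; congr (M c _); apply: val_inj.
  by rewrite /= inordK // ltn_pmod.
have Hsum : \sum_(i < N) d i = N.-1.
  transitivity (\sum_(j < N) \sum_(c < sigma) (M c j : nat)).
    by apply: eq_bigr => i _; rewrite /d inord_val card_sum.
  rewrite exchange_big /=; transitivity (\sum_(c < sigma) cnt c); last by rewrite Hcnt.
  apply: eq_bigr => c _; rewrite -HM card_sum.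
  by apply: eq_bigr.
have [r0 r0N v0] := cycle_exist N d N0 Hsum.
have rot_inj : forall r : nat, injective (fun j : 'I_N => Ordinal (rot_proof j r)).
  move=> r j1 j2 /(congr1 val) /= /eqP; rewrite eqn_modDr !modn_small // => /eqP.
  exact: val_inj.
split.
- move=> r1 r2 ne12; apply/eqP => E.
  have E' : forall x, x < N -> d ((x + r1) %% N) = d ((x + r2) %% N).
    move=> x xN; have := dcol r1 (Ordinal xN); have := dcol r2 (Ordinal xN).
    by rewrite /= E => -> ->.
  pose v := (r0 + N - r1) %% N.
  have vr1 : (v + r1) %% N = r0.
    rewrite modnDml (_ : r0 + N - r1 + r1 = r0 + N); last by have := ltn_ord r1; lia.
    by rewrite modnDr modn_small.
  have v1 : valid N (fun x => d ((x + r1) %% N)) v by apply/valid_rot; rewrite vr1.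
  have v2 : valid N (fun x => d ((x + r2) %% N)) v by apply: valid_ext v1.
  move/valid_rot: v2 => v2.
  have := cycle_uniq N d _ _ Hsum (ltn_pmod _ N0) r0N v2 v0.
  rewrite -vr1 => /eqP; rewrite eqn_modDl !modn_small // => /eqP H.
  by move/eqP: ne12; apply; apply: val_inj.
- exists (Ordinal r0N); split.
  + pose L := [seq [seq c <- enum 'I_sigma | rotmx r0 M c j] | j <- enum 'I_N].
    have nthL : forall j : 'I_N, nth [::] L j = [seq c <- enum 'I_sigma | rotmx r0 M c j].
      by move=> j; rewrite (nth_map ord0) ?size_enum_ord // nth_ord_enum.
    have sizeL : size L = N by rewrite size_map size_enum_ord.
    have sizes : forall i, i < N -> size (nth [::] L i) = d ((i + r0) %% N).
      move=> i iN; rewrite (nthL (Ordinal iN)) (dcol r0 (Ordinal iN)).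
      apply: sizeP; first by rewrite filter_uniq // enum_uniq.
      by move=> c; rewrite mem_filter mem_enum andbT.
    have sortL : all (sorted (fun a b : 'I_sigma => a < b)) L.
      rewrite all_map; apply/allP => j _ /=; apply: sorted_filter; last exact: sorted_enum_ord.
      move=> y x z; exact: ltn_trans.
    have sumk : forall k, k <= N -> sumn (map size (take k L)) = \sum_(i < k) d ((i + r0) %% N).
      move=> k kN; rewrite sumn_take ?sizeL //; apply: eq_bigr => i _; apply: sizes.
      exact: leq_trans (ltn_ord i) kN.
    have fv : fvalid sigma 1 L.
      split.
      * move=> j; rewrite sizeL => jN; rewrite sumk ?(ltnW jN) //; have := v0 j jN; lia.
      * rewrite -{2}(take_size L) sizeL sumk // rot_total // Hsum; lia.
    have [ts [szts wfts flts]] := forest_build sigma L 1 fv sortL.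
    case: ts szts wfts flts => [|t [|//]] //= _; rewrite andbT cats0 => wft pot.
    exists t; split; last first.
      apply/matrixP => i j; rewrite [LHS]mxE pot nthL mem_filter mem_enum andbT.
      by [].
    split => //; split; first by rewrite /num_nodes pot sizeL.
    move=> c; have := forest_edges sigma c [:: t]; rewrite /= !cats0 => ->.
    rewrite pot count_flatten -map_comp.
    rewrite (eq_map (_ : _ =1 fun j => (rotmx r0 M c j : nat))); last first.
      move=> j; rewrite /comp count_uniq_mem; last by rewrite filter_uniq //; apply: (enum_uniq (pred_of_simpl predT)).
      by rewrite mem_filter mem_enum andbT.
    rewrite sumnE big_map big_enum /= -card_sum -HM.
    rewrite -(card_rot _ _ (fun j => M c j) (rot_inj r0)).
    by apply: eq_card => j; rewrite -topredE /= mxE.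
  + move=> r' [t [[wft [nn cnts]] F]]; apply: val_inj => /=.
    have fv := forest_valid sigma [:: t]; rewrite /= cats0 in fv.
    have srt := forest_sorted sigma [:: t]; rewrite /= cats0 andbT in srt; have {}srt := srt wft.
    set L := preorder_out t in fv srt.
    have sizeL : size L = N by [].
    have sizes : forall i, i < N -> size (nth [::] L i) = d ((i + r') %% N).
      move=> i iN; rewrite (dcol r' (Ordinal iN)); apply: sizeP.
        apply: (sorted_uniq (leT := fun a b : 'I_sigma => a < b)).
        - move=> y x z; exact: ltn_trans.
        - move=> x; exact: ltnn.
        - by apply: (allP srt); rewrite mem_nth // sizeL.
      move=> c; have := congr1 (fun A : 'M[bool]_(sigma, N) => A c (Ordinal iN)) F; rewrite /= [in LHS]mxE => ->.
      by [].
    apply: (cycle_uniq N d _ _ Hsum r0N (ltn_ord r') v0) => k kN.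
    case: fv => fv _; have := fv k; rewrite sizeL => /(_ kN).
    rewrite sumn_take ?sizeL ?(ltnW kN) //.
    rewrite (eq_bigr (fun i : 'I_k => d ((i + r') %% N))); first by rewrite add1n ltnS.
    move=> i _; apply: sizes; exact: ltn_trans (ltn_ord i) kN.
Qed.
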